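(* For all finite sets of formulas $\Gamma,\Delta$: if the sequent $\Gamma\Rightarrow\Delta$ is provable in $\mathsf{CLp}$, then $\Gamma\Vdash\Delta$.
   Context: Fix a countably infinite set $\mathsf{At}$ of atoms. Formulas are built from atoms and the constant $\bot$ using the binary connectives $\land,\lor,\to$. All contexts are finite sets (not multisets) of formulas; a comma denotes union; a subscript $\mathsf{At}$ indicates a finite set of atoms. An atomic sequent has the form $\Gamma_{\mathsf{At}} \Rightarrow \Delta_{\mathsf{At}}$. An atomic rule has finitely many (possibly zero) atomic sequents as premises and one atomic sequent as conclusion; a rule with zero premises is an atomic axiom. A base is a (possibly empty) set of atomic rules; $\mathcal{C}\supseteq\mathcal{B}$ ($\mathcal{C}$ extends $\mathcal{B}$) if $\mathcal{C}$ contains every rule of $\mathcal{B}$. Derivability $\vdash_{\mathcal{B}}$ of atomic sequents is the least relation such that: (Axiom/Weakening) if an atomic axiom with conclusion $\Gamma_{\mathsf{At}}\Rightarrow\Delta_{\mathsf{At}}$ is in $\mathcal{B}$, then $\vdash_{\mathcal{B}} \Theta_{\mathsf{At}},\Gamma_{\mathsf{At}}\Rightarrow\Delta_{\mathsf{At}},\Sigma_{\mathsf{At}}$ for all sets of atoms $\Theta_{\mathsf{At}},\Sigma_{\mathsf{At}}$; (Mix) if a rule with premises $\Gamma^i_{\mathsf{At}}\Rightarrow\Delta^i_{\mathsf{At}}$ ($1\le i\le n$) and conclusion $\Gamma_{\mathsf{At}}\Rightarrow\Delta_{\mathsf{At}}$ is in $\mathcal{B}$ and $\vdash_{\mathcal{B}}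 \Theta^i_{\mathsf{At}},\Gamma^i_{\mathsf{At}}\Rightarrow\Delta^i_{\mathsf{At}},\Sigma^i_{\mathsf{At}}$ for each $i$, then $\vdash_{\mathcal{B}} \Theta^1_{\mathsf{At}},\dots,\Theta^n_{\mathsf{At}},\Gamma_{\mathsf{At}}\Rightarrow\Delta_{\mathsf{At}},\Sigma^1_{\mathsf{At}},\dots,\Sigma^n_{\mathsf{At}}$. Support $\Vdash_{\mathcal{B}}$: (At) $\Vdash_{\mathcal{B}}\Gamma_{\mathsf{At}}$ iff $\vdash_{\mathcal{B}}\ \Rightarrow\Gamma_{\mathsf{At}}$; ($\land$) $\Vdash_{\mathcal{B}} A\land B,\Gamma$ iff $\Vdash_{\mathcal{B}}A,\Gamma$ and $\Vdash_{\mathcal{B}}B,\Gamma$; ($\lor$) $\Vdash_{\mathcal{B}}A\lor B,\Gamma$ iff $\Vdash_{\mathcal{B}}A,B,\Gamma$; ($\to$) $\Vdash_{\mathcal{B}}A\to B,\Gamma$ iff $A\Vdash_{\mathcal{B}}B,\Gamma$; ($\bot$) $\Vdash_{\mathcal{B}}\bot,\Gamma$ iff $\Vdash_{\mathcal{B}}\Gamma$; (Inf) for $n\ge1$, $\{A^1,\dots,A^n\}\Vdash_{\mathcal{B}}\Delta$ iff for every $\mathcal{C}\supseteq\mathcal{B}$ and all sets of atoms $\Theta^1_{\mathsf{At}},\dots,\Theta^n_{\mathsf{At}}$, if $\Vdash_{\mathcal{C}}\Theta^i_{\mathsf{At}},A^i$ for all $i$ then $\Vdash_{\mathcal{C}}\Theta^1_{\mathsf{At}},\dots,\Theta^n_{\mathsf{At}},\Delta$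 (and $\varnothing\Vdash_{\mathcal{B}}\Delta$ means $\Vdash_{\mathcal{B}}\Delta$). The atomic identity rule $\mathsf{Ainit}$ is the atomic axiom $\Gamma_{\mathsf{At}},p\Rightarrow p,\Delta_{\mathsf{At}}$; the atomic cut rule $\mathsf{Acut}$ has premises $\Gamma^1_{\mathsf{At}}\Rightarrow\Delta^1_{\mathsf{At}},p$ and $p,\Gamma^2_{\mathsf{At}}\Rightarrow\Delta^2_{\mathsf{At}}$ and conclusion $\Gamma^1_{\mathsf{At}},\Gamma^2_{\mathsf{At}}\Rightarrow\Delta^1_{\mathsf{At}},\Delta^2_{\mathsf{At}}$. $\mathcal{ST}$ is the base consisting of all instances of $\mathsf{Ainit}$ and $\mathsf{Acut}$ (all atoms $p$, all sets of atoms). Validity: $\Gamma\Vdash\Delta$ iff $\Gamma\Vdash_{\mathcal{B}}\Delta$ for every base $\mathcal{B}\supseteq\mathcal{ST}$. $\mathsf{CLp}$ is the sequent calculus on sequents $\Gamma\Rightarrow\Delta$ (finite sets of formulas) with rules: $\mathsf{init}$: $\Gamma,A\Rightarrow A,\Delta$; $L\bot$: $\Gamma,\bot\Rightarrow\Delta$; $R\bot$: from $\Gamma\Rightarrow\Delta$ infer $\Gamma\Rightarrow\bot,\Delta$; $L\land$: from $A,B,\Gamma\Rightarrow\Delta$ infer $A\land B,\Gamma\Rightarrow\Delta$; $R\land$: from $\Gamma\Rightarrow\Delta,A$ and $\Gamma'\Rightarrow\Delta',B$ infer $\Gamma,\Gamma'\Rightarrow\Delta,\Delta',A\land B$; $L\lor$: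 from $A,\Gamma\Rightarrow\Delta$ and $B,\Gamma'\Rightarrow\Delta'$ infer $A\lor B,\Gamma,\Gamma'\Rightarrow\Delta,\Delta'$; $R\lor$: from $\Gamma\Rightarrow\Delta,A,B$ infer $\Gamma\Rightarrow\Delta,A\lor B$; $L\to$: from $\Gamma\Rightarrow\Delta,A$ and $B,\Gamma'\Rightarrow\Delta'$ infer $A\to B,\Gamma,\Gamma'\Rightarrow\Delta,\Delta'$; $R\to$: from $A,\Gamma\Rightarrow\Delta,B$ infer $\Gamma\Rightarrow\Delta,A\to B$. *)

(* Defs.v *)
From HB Require Import structures.
From mathcomp Require Import all_boot.
From mathcomp Require Import finmap.
Set Implicit Arguments. Unset Strict Implicit. Unset Printing Implicit Defensive.
Local Open Scope fset_scope.

Definition atom := nat.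

Inductive form : Type :=
| At of atom
| Bot
| And of form & form
| Or of form & form
| Imp of form & form.

Fixpoint form_enc (A : form) : GenTree.tree nat :=
  match A with
  | At p => GenTree.Leaf p
  | Bot => GenTree.Node 0 [::]
  | And A B => GenTree.Node 1 [:: form_enc A; form_enc B]
  | Or A B => GenTree.Node 2 [:: form_enc A; form_enc B]
  | Imp A B => GenTree.Node 3 [:: form_enc A; form_enc B]
  end.
Fixpoint form_dec (t : GenTree.tree nat) : option form :=
  match t with
  | GenTree.Leaf p => Some (At p)
  | GenTree.Node 0 [::] => Some Bot
  | GenTree.Node 1 [:: a; b] =>
      if (form_dec a, form_dec b) is (Some A, Some B) then Some (And A B) else None
  | GenTree.Node 2 [:: a; b] =>
      if (form_dec a, form_dec b) is (Some A, Some B) then Some (Or A B) else None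
  | GenTree.Node 3 [:: a; b] =>
      if (form_dec a, form_dec b) is (Some A, Some B) then Some (Imp A B) else None
  | _ => None
  end.
Lemma form_encK : pcancel form_enc form_dec.
Proof. by elim=> //= [A -> B ->|A -> B ->|A -> B ->]. Qed.
HB.instance Definition _ := Countable.copy form (pcan_type form_encK).

(* Atomic sequents: pairs of finite sets of atoms (antecedent, succedent). *)
Definition asequent := ({fset atom} * {fset atom})%type.

Record arule := ARule { prems : {fset asequent}; concl : asequent }.

Definition base := arule -> Prop.
Definition extends (B C : base) : Prop := forall r, B r -> C r.

Inductive derivable (B : base) : asequent -> Prop :=
| der_axiom (r : arule) (Th Sg : {fset atom}) :
    B r -> prems r = fset0 ->
    derivable B (Th `|` (concl r).1, (concl r).2 `|` Sg)
| der_mix (r : arule) (Th Sg : asequent -> {fset atom}) :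
    B r ->
    (forall P, P \in prems r -> derivable B (Th P `|` P.1, P.2 `|` Sg P)) ->
    derivable B ((\bigcup_(P <- prems r) Th P) `|` (concl r).1,
                 (concl r).2 `|` \bigcup_(P <- prems r) Sg P).

(* Support.  [supp_aux A k B D] means: |-_B  A, (atoms D), Rest, where the
   remaining context Rest (at any base C) is represented by the continuation
   k C D' meaning |-_C (atoms D'), Rest.  The clauses are exactly (At), (/\),
   (\/), (->) with (Inf) for a single premise, and (Bot). *)
Definition supp_atoms (C : base) (D : {fset atom}) : Prop := derivable C (fset0, D).

Fixpoint supp_aux (A : form) (k : base -> {fset atom} -> Prop)
    (B : base) (D : {fset atom}) : Prop :=
  match A with
  | At p => k B (p |` D)
  | Bot => k B D
  | And A1 A2 => supp_aux A1 k B D /\ supp_aux A2 k B D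
  | Or A1 A2 => supp_aux A1 (fun C D' => supp_aux A2 k C D') B D
  | Imp A1 A2 =>
      (* A1 ||-_B A2, (atoms D), Rest  via (Inf) with n = 1 *)
      forall C : base, extends B C ->
      forall Th : {fset atom}, supp_aux A1 supp_atoms C Th ->
      supp_aux A2 k C (Th `|` D)
  end.

Definition supp_list (l : seq form) : base -> {fset atom} -> Prop :=
  foldr supp_aux supp_atoms l.

Definition supports (B : base) (G : {fset form}) : Prop :=
  supp_list (enum_fset G) B fset0.

Definition atoms_form (Th : {fset atom}) : {fset form} := [fset At p | p in Th].

Definition inf_supports (B : base) (G D : {fset form}) : Prop :=
  if G == fset0 then supports B D
  else forall C : base, extends B C ->
       forall Th : form -> {fset atom},
       (forall A, A \in G -> supports C (atoms_form (Th A) `|` [fset A])) ->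
       supports C (atoms_form (\bigcup_(A <- enum_fset G) Th A) `|` D).

Definition Ainit (p : atom) (G D : {fset atom}) : arule :=
  ARule fset0 (p |` G, p |` D).
Definition Acut (p : atom) (G1 D1 G2 D2 : {fset atom}) : arule :=
  ARule [fset (G1, p |` D1); (p |` G2, D2)] (G1 `|` G2, D1 `|` D2).
Definition ST : base := fun r =>
  (exists p G D, r = Ainit p G D) \/
  (exists p G1 D1 G2 D2, r = Acut p G1 D1 G2 D2).

Definition valid (G D : {fset form}) : Prop :=
  forall B : base, extends ST B -> inf_supports B G D.

Inductive CLp : {fset form} -> {fset form} -> Prop :=
| CLp_init G D A : CLp (A |` G) (A |` D)
| CLp_Lbot G D : CLp (Bot |` G) D
| CLp_Rbot G D : CLp G D -> CLp G (Bot |` D)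
| CLp_Land G D A B : CLp (A |` (B |` G)) D -> CLp (And A B |` G) D
| CLp_Rand G D G' D' A B :
    CLp G (A |` D) -> CLp G' (B |` D') -> CLp (G `|` G') (And A B |` (D `|` D'))
| CLp_Lor G D G' D' A B :
    CLp (A |` G) D -> CLp (B |` G') D' -> CLp (Or A B |` (G `|` G')) (D `|` D')
| CLp_Ror G D A B : CLp G (A |` (B |` D)) -> CLp G (Or A B |` D)
| CLp_Limp G D G' D' A B :
    CLp G (A |` D) -> CLp (B |` G') D' -> CLp (Imp A B |` (G `|` G')) (D `|` D')
| CLp_Rimp G D A B : CLp (A |` G) (B |` D) -> CLp G (Imp A B |` D).

(* Main.v *)
Require Import Defs.
From mathcomp Require Import all_boot finmap.
Set Implicit Arguments. Unset Strict Implicit. Unset Printing Implicit Defensive.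
Local Open Scope fset_scope.

Ltac fset_solve :=
  repeat match goal with H : is_true (fsubset _ _) |- _ => move/fsubsetP: H => H end;
  let y := fresh "y" in
  apply/fsubsetP; intros y; rewrite ?in_fsetU ?in_fset0;
  repeat match goal with H : {subset _ <= _} |- _ =>
    move: (H y) => {H}; rewrite ?in_fsetU ?in_fset0 end;
  by do ![case: (y \in _)].

Ltac fset_eq := let y := fresh "y" in
  apply/fsetP; intros y; rewrite ?in_fsetU ?in_fset0; by do ![case: (y \in _)].

Lemma ext_refl B : extends B B. Proof. by []. Qed.
Lemma ext_trans B C D : extends B C -> extends C D -> extends B D.
Proof. by move=> h1 h2 r /h1 /h2. Qed.

Lemma der_mono B s : derivable B s -> forall C, extends B C -> derivable C s.
Proof.
elim=> {s} [r Th Sg Hr Hp | r Th Sg Hr Hd IH] C HBC.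
- exact: der_axiom (HBC _ Hr) Hp.
- apply: der_mix (HBC _ Hr) _ => P HP; exact: IH.
Qed.

Lemma der_weak0 B s : derivable B s -> forall X Y, derivable B (X `|` s.1, s.2 `|` Y).
Proof.
elim=> {s} [r Th Sg Hr Hp | r Th Sg Hr Hd IH] X Y /=.
- rewrite (fsetUA X) -(fsetUA (concl r).2); exact: der_axiom.
- have [Hp|Hn] := eqVneq (prems r) fset0.
    rewrite (fsetUA X) -(fsetUA (concl r).2); exact: der_axiom.
  have [P0 HP0] : exists P0, P0 \in prems r.
    case: (fset_0Vmem (prems r)) => [E|[x Hx]]; [by rewrite E eqxx in Hn | by exists x].
  have E1 : X `|` \bigcup_(P <- prems r) Th P = \bigcup_(P <- prems r) (X `|` Th P).
    apply/fsetP => x; rewrite in_fsetU; apply/orP/bigfcupP.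
    + case=> [Hx|/bigfcupP [i Hi Hx]]; first by exists P0; rewrite ?HP0 // in_fsetU Hx.
      by exists i; rewrite // in_fsetU Hx orbT.
    + case=> i Hi; rewrite in_fsetU => /orP [Hx|Hx]; first by left.
      by right; apply/bigfcupP; exists i.
  have E2 : \bigcup_(P <- prems r) Sg P `|` Y = \bigcup_(P <- prems r) (Sg P `|` Y).
    apply/fsetP => x; rewrite in_fsetU; apply/orP/bigfcupP.
    + case=> [/bigfcupP [i Hi Hx]|Hx]; last by exists P0; rewrite ?HP0 // in_fsetU Hx orbT.
      by exists i; rewrite // in_fsetU Hx.
    + case=> i Hi; rewrite in_fsetU => /orP [Hx|Hx]; last by right.
      by left; apply/bigfcupP; exists i.
  rewrite (fsetUA X) E1 -(fsetUA (concl r).2) E2.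
  apply: der_mix Hr _ => P HP.
  rewrite -(fsetUA X) (fsetUA P.2); exact: IH.
Qed.

Lemma der_weak B G D G' D' : derivable B (G, D) -> G `<=` G' -> D `<=` D' ->
  derivable B (G', D').
Proof.
move=> H h1 h2; have := der_weak0 H G' D' => /=.
have -> : G' `|` G = G' by apply/fsetP => x; rewrite in_fsetU; move/fsubsetP: h1 => h1;
  case E: (x \in G); rewrite ?orbF // (h1 _ E) orbT.
have -> // : D `|` D' = D' by apply/fsetP => x; rewrite in_fsetU; move/fsubsetP: h2 => h2;
  case E: (x \in D) => //=; rewrite (h2 _ E).
Qed.

Lemma der_weakR C E E' : derivable C (fset0, E) -> E `<=` E' -> derivable C (fset0, E').
Proof. move=> H h; exact: der_weak H (fsubset_refl _) h. Qed.

Fixpoint T (A : form) (C : base) (E : {fset atom}) : Prop :=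
  match A with
  | At p => E = [fset p]
  | Bot => E = fset0
  | And A1 A2 => T A1 C E \/ T A2 C E
  | Or A1 A2 => exists E1 E2, [/\ T A1 C E1, T A2 C E2 & E = E1 `|` E2]
  | Imp A1 A2 => exists X E2, [/\ supp_aux A1 supp_atoms C X, T A2 C E2 & E = E2 `|` X]
  end.

Definition mono (k : base -> {fset atom} -> Prop) :=
  forall C C' D, extends C C' -> k C D -> k C' D.

Lemma mono_atoms : mono supp_atoms.
Proof. move=> C C' D h H; exact: der_mono H _ h. Qed.

Lemma key A :
  (forall C C' E, extends C C' -> T A C E -> T A C' E) /\
  (forall k, mono k -> forall B D, supp_aux A k B D <->
     (forall C, extends B C -> forall E, T A C E -> k C (E `|` D))).
Proof.
elim: A => [p| |A1 [a1 b1] A2 [a2 b2]|A1 [a1 b1] A2 [a2 b2]|A1 [a1 b1] A2 [a2 b2]] /=.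
- split=> // k mk B D; split.
  + by move=> H C hC E ->; exact: mk hC H.
  + by move=> H; apply: H => //; exact: ext_refl.
- split=> // k mk B D; split.
  + by move=> H C hC E ->; rewrite fset0U; exact: mk hC H.
  + by move=> H; rewrite -[D]fset0U; apply: H => //; exact: ext_refl.
- split; first by move=> C C' E h [H|H]; [left; exact: a1 h H | right; exact: a2 h H].
  move=> k mk B D; rewrite (b1 k mk) (b2 k mk); split.
  + by move=> [H1 H2] C hC E [H|H]; [exact: H1 | exact: H2].
  + by move=> H; split=> C hC E HE; apply: H => //; [left|right].
- split.
    by move=> C C' E h [E1 [E2 [H1 H2 ->]]]; exists E1, E2; split; [exact: a1 h H1|exact: a2 h H2|].
  move=> k mk B D.
  have mk' : mono (fun C D' => supp_aux A2 k C D').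
    move=> C C' D' h; rewrite !(b2 k mk) => H C'' h' E HE; apply: H => //; exact: ext_trans h h'.
  rewrite (b1 _ mk'); split.
  + move=> H C hC E [E1 [E2 [H1 H2 ->]]].
    have := H C hC E1 H1; rewrite (b2 k mk) => H'.
    have := H' C (@ext_refl _) E2 H2.
    by have -> : E2 `|` (E1 `|` D) = E1 `|` E2 `|` D by fset_eq.
  + move=> H C hC E1 H1; rewrite (b2 k mk) => C' hC' E2 H2.
    have := H C' (ext_trans hC hC') (E1 `|` E2).
    have -> : E2 `|` (E1 `|` D) = E1 `|` E2 `|` D by fset_eq.
    apply; exists E1, E2; split=> //; exact: a1 hC' H1.
- have m1 : forall C C' X, extends C C' -> supp_aux A1 supp_atoms C X -> supp_aux A1 supp_atoms C' X.
    move=> C C' X h; rewrite !(b1 _ mono_atoms) => H C'' h' E HE; apply: H => //; exact: ext_trans h h'.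
  split.
    by move=> C C' E h [X [E2 [H1 H2 ->]]]; exists X, E2; split; [exact: m1 h H1|exact: a2 h H2|].
  move=> k mk B D; split.
  + move=> H C hC E [X [E2 [H1 H2 ->]]].
    have := H C hC X H1; rewrite (b2 k mk) => H'.
    have := H' C (@ext_refl _) E2 H2.
    by rewrite fsetUA.
  + move=> H C hC Th HTh; rewrite (b2 k mk) => C' hC' E2 H2.
    rewrite fsetUA; apply: H; first exact: ext_trans hC hC'.
    exists Th, E2; split=> //; exact: m1 hC' HTh.
Qed.

Lemma T_mono A C C' E : extends C C' -> T A C E -> T A C' E.
Proof. exact: (key A).1. Qed.

Definition Sat C A S := supp_aux A supp_atoms C S.

Lemma Sat_iff C A S : Sat C A S <->
  (forall C', extends C C' -> forall E, T A C' E -> derivable C' (fset0, E `|` S)).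
Proof. exact: (key A).2 _ mono_atoms C S. Qed.

Lemma Sat_mono C C' A S : extends C C' -> Sat C A S -> Sat C' A S.
Proof.
move=> h; rewrite !Sat_iff => H C'' h' E HE; apply: H => //; exact: ext_trans h h'.
Qed.

Lemma Sat_weak C A S S' : S `<=` S' -> Sat C A S -> Sat C A S'.
Proof.
move=> h; rewrite !Sat_iff => H C' h' E HE; apply: der_weakR (H C' h' E HE) _; fset_solve.
Qed.

Definition Cov (l : seq form) C E :=
  forall A, A \in l -> exists2 E', T A C E' & E' `<=` E.

Lemma supp_list_iff l : forall B D, supp_list l B D <->
  (forall C, extends B C -> forall E, Cov l C E -> derivable C (fset0, E `|` D)).
Proof.
elim: l => [|A l IH] B D /=.
  split.
  + move=> H C hC E _; apply: der_weakR (der_mono H hC) _; fset_solve.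
  + move=> H; rewrite -[D]fset0U; apply: H (@ext_refl _) _ _ => A; by rewrite in_nil.
have ml : mono (supp_list l).
  move=> C C' D' h; rewrite !IH => H C'' h' E HE; apply: H => //; exact: ext_trans h h'.
change (supp_aux A (supp_list l) B D <-> (forall C, extends B C -> forall E,
  Cov (A :: l) C E -> derivable C (fset0, E `|` D))).
rewrite ((key A).2 _ ml); split.
- move=> H C hC E HC.
  have [E1 H1 s1] := HC A (mem_head _ _).
  have := H C hC E1 H1; rewrite IH => H'.
  have Hd : derivable C (fset0, E `|` (E1 `|` D)).
    apply: H' (@ext_refl _) _ _ => X HX; apply: HC; by rewrite in_cons HX orbT.
  apply: der_weakR Hd _; fset_solve.
- move=> H C hC E1 H1; rewrite IH => C' hC' E HE.
  have Hd : derivable C' (fset0, (E `|` E1) `|` D).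
    apply: H (ext_trans hC hC') _ _ => X; rewrite in_cons => /orP [/eqP ->|HX].
      by exists E1; [exact: T_mono hC' H1 | fset_solve].
    have [E' H' s'] := HE X HX; exists E' => //; fset_solve.
  apply: der_weakR Hd _; fset_solve.
Qed.

Definition CovS (G : {fset form}) C E :=
  forall A, A \in G -> exists2 E', T A C E' & E' `<=` E.

Lemma supports_iff B G : supports B G <->
  (forall C, extends B C -> forall E, CovS G C E -> derivable C (fset0, E)).
Proof.
rewrite /supports /supp_list.
change (supp_list (enum_fset G) B fset0 <-> (forall C, extends B C -> forall E, CovS G C E -> derivable C (fset0, E))).
rewrite supp_list_iff; split=> H C hC E HE.
- by have := H C hC E HE; rewrite fsetU0.
- by rewrite fsetU0; exact: H.
Qed.

Lemma supports_atoms C U D :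
  (forall C', extends C C' -> forall E, CovS D C' E -> derivable C' (fset0, E `|` U)) ->
  supports C (atoms_form U `|` D).
Proof.
move=> H; rewrite supports_iff => C' hC' E HE.
have sU : U `<=` E.
  apply/fsubsetP => p Hp.
  have [E' HT sE] : exists2 E', T (At p) C' E' & E' `<=` E.
    apply: HE; rewrite in_fsetU; apply/orP; left; apply/imfsetP; by exists p.
  move: HT sE => /= -> /fsubsetP; apply; by rewrite in_fset1.
have HD : CovS D C' E by move=> A HA; apply: HE; rewrite in_fsetU HA orbT.
apply: der_weakR (H C' hC' E HD) _; fset_solve.
Qed.

Lemma supp_single C U A : supports C (atoms_form U `|` [fset A]) -> Sat C A U.
Proof.
rewrite supports_iff Sat_iff => H C' hC' E HE; apply: H => // X.
rewrite in_fsetU => /orP [/imfsetP [p Hp ->]|].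
  exists [fset p] => //; apply/fsubsetP => y; rewrite in_fset1 in_fsetU => /eqP ->.
  by rewrite Hp orbT.
rewrite in_fset1 => /eqP ->; exists E => //; fset_solve.
Qed.

Definition Sem B (G D : {fset form}) :=
  forall C, extends B C -> forall S, (forall X, X \in G -> Sat C X S) ->
  forall E, CovS D C E -> derivable C (fset0, E `|` S).

Lemma Sem_inf B G D : Sem B G D -> inf_supports B G D.
Proof.
move=> H; rewrite /inf_supports; case: eqP => [HG|_].
  rewrite supports_iff => C hC E HE.
  rewrite -[E]fsetU0; apply: H hC _ _ _ HE => X; by rewrite HG in_fset0.
move=> C hC Th HTh; apply: supports_atoms => C' hC' E HE.
apply: H (ext_trans hC hC') _ _ _ HE => X HX.
apply: Sat_mono hC' _; apply: Sat_weak (supp_single (HTh X HX)).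
apply/fsubsetP => y Hy; apply/bigfcupP; exists X => //; by rewrite andbT.
Qed.

Lemma CovS_mono D C C' E : extends C C' -> CovS D C E -> CovS D C' E.
Proof. move=> h H X HX; have [E' H1 s] := H X HX; exists E' => //; exact: T_mono h H1. Qed.

Lemma CovS_sub D D' C E : (forall X, X \in D' -> X \in D) -> CovS D C E -> CovS D' C E.
Proof. move=> h H X HX; exact: H (h X HX). Qed.

Lemma CovS_weak D C E E' : E `<=` E' -> CovS D C E -> CovS D C E'.
Proof. move=> h H X HX; have [E'' H1 s] := H X HX; exists E'' => //; fset_solve. Qed.

Lemma Sat_or C A B S : Sat C (Or A B) S ->
  forall C', extends C C' -> forall E1, T A C' E1 -> Sat C' B (E1 `|` S).
Proof.
move=> H; have mk : mono (fun C D => Sat C B D) by move=> ? ? ? h; exact: Sat_mono h.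
by move: H; rewrite /Sat /= ((key A).2 _ mk).
Qed.

Ltac mem_tac := move=> ?; rewrite ?in_fsetU ?in_fset1; by do ![case: (_ \in _)|case: (_ == _)].

Lemma sound G D : CLp G D -> forall B, Sem B G D.
Proof.
elim=> {G D}.
-
  move=> G D A B C hC S HS E HE.
  have [E' H1 s] := HE A (fset1U1 _ _).
  have := HS A (fset1U1 _ _); rewrite Sat_iff => H.
  apply: der_weakR (H C (@ext_refl _) E' H1) _; fset_solve.
-
  move=> G D B C hC S HS E HE.
  have /= H := HS Bot (fset1U1 _ _).
  apply: der_weakR H _; fset_solve.
-
  move=> G D _ IH B C hC S HS E HE.
  apply: IH hC _ HS _ _; apply: CovS_sub HE => X HX; by rewrite in_fsetU HX orbT.
-
  move=> G D A A' _ IH B C hC S HS E HE.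
  apply: IH hC _ _ _ HE => X; rewrite !in_fsetU !in_fset1 => /orP [/eqP ->|/orP [/eqP ->|HX]].
  + exact: (HS (And A A') (fset1U1 _ _)).1.
  + exact: (HS (And A A') (fset1U1 _ _)).2.
  + by apply: HS; rewrite in_fsetU HX orbT.
-
  move=> G D G' D' A A' _ IH1 _ IH2 B C hC S HS E HE.
  have [E' [H1|H1] s] := HE (And A A') (fset1U1 _ _).
  + apply: IH1 hC _ _ _ _.
      by move=> X HX; apply: HS; rewrite in_fsetU HX.
    move=> X; rewrite in_fsetU in_fset1 => /orP [/eqP ->|HX]; first by exists E'.
    by apply: HE; rewrite in_fsetU in_fsetU HX orbT.
  + apply: IH2 hC _ _ _ _.
      by move=> X HX; apply: HS; rewrite in_fsetU HX orbT.
    move=> X; rewrite in_fsetU in_fset1 => /orP [/eqP ->|HX]; first by exists E'.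
    by apply: HE; rewrite !in_fsetU HX !orbT.
-
  move=> G D G' D' A A' _ IH1 _ IH2 B C hC S HS E HE.
  have Hor := Sat_or (HS (Or A A') (fset1U1 _ _)).
  have SA : Sat C A (E `|` S).
    rewrite Sat_iff => C' hC' E1 H1.
    have Hd : derivable C' (fset0, E `|` (E1 `|` S)).
      apply: IH2 (ext_trans hC hC') _ _ _ _.
        move=> X; rewrite in_fsetU in_fset1 => /orP [/eqP ->|HX]; first exact: Hor.
        apply: Sat_weak (Sat_mono hC' (HS X _)); first by fset_solve.
        by rewrite !in_fsetU HX !orbT.
      apply: CovS_mono hC' _; apply: CovS_sub HE => X HX; by rewrite !in_fsetU HX orbT.
    apply: der_weakR Hd _; fset_solve.
  have Hd : derivable C (fset0, E `|` (E `|` S)).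
    apply: IH1 hC _ _ _ _.
      move=> X; rewrite in_fsetU in_fset1 => /orP [/eqP ->|HX] //.
      apply: Sat_weak (HS X _); first by fset_solve.
      by rewrite !in_fsetU HX !orbT.
    apply: CovS_sub HE => X HX; by rewrite !in_fsetU HX.
  apply: der_weakR Hd _; fset_solve.
-
  move=> G D A A' _ IH B C hC S HS E HE.
  apply: IH hC _ HS _ _.
  have [E' [E1 [E2 [H1 H2 HE']]] s] := HE (Or A A') (fset1U1 _ _).
  subst E'.
  move=> X; rewrite !in_fsetU !in_fset1 => /orP [/eqP ->|/orP [/eqP ->|HX]].
  + by exists E1 => //; fset_solve.
  + by exists E2 => //; fset_solve.
  + by apply: HE; rewrite in_fsetU HX orbT.
-
  move=> G D G' D' A A' _ IH1 _ IH2 B C hC S HS E HE.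
  have Himp := HS (Imp A A') (fset1U1 _ _).
  have SA : Sat C A (E `|` S).
    rewrite Sat_iff => C' hC' E1 H1.
    have Hd : derivable C' (fset0, (E1 `|` E) `|` S).
      apply: IH1 (ext_trans hC hC') _ _ _ _.
        move=> X HX; apply: Sat_mono hC' (HS X _); by rewrite !in_fsetU HX !orbT.
      move=> X; rewrite in_fsetU in_fset1 => /orP [/eqP ->|HX].
        by exists E1 => //; fset_solve.
      have [E' H' s'] : exists2 E', T X C E' & E' `<=` E by apply: HE; rewrite in_fsetU HX.
      exists E'; [exact: T_mono hC' H' | fset_solve].
    apply: der_weakR Hd _; fset_solve.
  have SB : Sat C A' ((E `|` S) `|` S) := Himp C (@ext_refl _) _ SA.
  have Hd : derivable C (fset0, E `|` ((E `|` S) `|` S)).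
    apply: IH2 hC _ _ _ _.
      move=> X; rewrite in_fsetU in_fset1 => /orP [/eqP ->|HX] //.
      apply: Sat_weak (HS X _); first by fset_solve.
      by rewrite !in_fsetU HX !orbT.
    apply: CovS_sub HE => X HX; by rewrite !in_fsetU HX orbT.
  apply: der_weakR Hd _; fset_solve.
-
  move=> G D A A' _ IH B C hC S HS E HE.
  have [E' [X [E2 [H1 H2 HE']]] s] := HE (Imp A A') (fset1U1 _ _).
  subst E'.
  have Hd : derivable C (fset0, E `|` (X `|` S)).
    apply: IH hC _ _ _ _.
      move=> Y; rewrite in_fsetU in_fset1 => /orP [/eqP ->|HY].
        by apply: Sat_weak H1; fset_solve.
      by apply: Sat_weak (HS Y HY); fset_solve.
    move=> Y; rewrite in_fsetU in_fset1 => /orP [/eqP ->|HY].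
      by exists E2 => //; fset_solve.
    by apply: HE; rewrite in_fsetU HY orbT.
  apply: der_weakR Hd _; fset_solve.
Qed.

Theorem theorem2 (G D : {fset form}) : CLp G D -> valid G D.
Proof. move=> H B _; apply: Sem_inf; exact: sound. Qed.
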